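(* Let $n$ be an odd positive integer and let $h\ge 2$ be an integer. Then there exists a $(2n+1)\times(2n+1)$ matrix $B$, all of whose entries lie in $\{0,1,\ldots,h\}$, which has two distinct real eigenvalues $\lambda\neq\mu$ with $|\lambda-\mu|\le h^{-\frac{(n+3)(n-3)}{4}}$. Moreover, $\lambda$ and $\mu$ are both roots of a single factor of the characteristic polynomial $\chi(B)$ which is irreducible over $\mathbb{Z}$ and has degree $n+1$.
   Context: $\chi(B)=\det(tI-B)$ denotes the characteristic polynomial of $B$, a monic polynomial with integer coefficients. *)

(* Defs.v *)
From HB Require Import structures.
From mathcomp Require Import all_boot all_order all_algebra.
From mathcomp Require Import Rstruct.

Set Implicit Arguments. Unset Strict Implicit. Unset Printing Implicit Defensive.
Import Order.TTheory GRing.Theory Num.Theory.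
Local Open Scope ring_scope.

(* The exponent (n+3)(n-3)/4 as an integer; for odd n it is an exact quotient. *)
Definition sep_exp (n : nat) : int := divz ((n%:Z + 3) * (n%:Z - 3)) 4.

(* Main.v *)
Require Import Defs.
From HB Require Import structures.
From mathcomp Require Import all_boot all_order all_algebra.
From mathcomp Require Import Rstruct.
From mathcomp Require Import ring lra zify.
Set Warnings "-notation-overridden,-ambiguous-paths".

Import Order.TTheory GRing.Theory Num.Theory.
Local Open Scope ring_scope.
Definition ev (z : int) : bool := (2 %| z)%Z.

Lemma odd2M (a b : int) : ~~ ev a -> ~~ ev b -> ~~ ev (a * b).
Proof.
rewrite /ev !dvdzE abszM Euclid_dvdM //. by move=> /negPf -> /negPf ->.
Qed.

Lemma aux1 (i j x : nat) : (i < x)%N -> (x <= i + j)%N -> (i + j - x < j)%N.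
Proof. lia. Qed.

Lemma aux2 (a b i j : nat) : (1 < a)%N -> (1 < b)%N -> (i <= a.-1)%N -> (j <= b.-1)%N ->
  ((a + b).-1.-1 <= i + j)%N -> i = a.-1 /\ j = b.-1.
Proof. case: a => [|[|a]] //; case: b => [|[|b]] // _ _ /=; rewrite !addnS /=; lia. Qed.

Lemma parity_core (f g : {poly int}) : (1 < size f)%N -> (1 < size g)%N ->
  ~~ ev (lead_coef f) -> ~~ ev (lead_coef g) ->
  (forall k, (k < (size (f*g)%R).-1)%N -> ev (f*g)`_k) ->
  ev f`_0 /\ ev g`_0.
Proof.
move=> sf sg lf lg hev.
have f0 : f != 0 by rewrite -size_poly_gt0 (ltn_trans _ sf).
have g0 : g != 0 by rewrite -size_poly_gt0 (ltn_trans _ sg).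
have exf : exists i, ~~ ev f`_i by exists (size f).-1.
have exg : exists i, ~~ ev g`_i by exists (size g).-1.
case: (ex_minnP exf) => i fi imin.
case: (ex_minnP exg) => j gj jmin.
have ile : (i <= (size f).-1)%N by apply: imin.
have jle : (j <= (size g).-1)%N by apply: jmin.
have fev l : (l < i)%N -> ev f`_l.
  by move=> li; apply/negPn/negP => /imin; rewrite leqNgt li.
have gev l : (l < j)%N -> ev g`_l.
  by move=> li; apply/negPn/negP => /jmin; rewrite leqNgt li.
have hij : ~~ ev (f*g)`_(i+j).
  rewrite coefM.
  have ii : (i < (i+j).+1)%N by rewrite ltnS leq_addr.
  rewrite (bigD1 (Ordinal ii)) //= addKn.
  apply/negP => h2.
  have h3 : ev (\sum_(l < (i+j).+1 | l != Ordinal ii) f`_l * g`_(i + j - l)).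
    apply: rpred_sum => l /= hl.
    have : (val l != i) by [].
    rewrite neq_ltn => /orP [li|il].
      by apply: dvdz_mulr; apply: fev.
    apply: dvdz_mull; apply: gev.
    move: il (ltn_ord l); rewrite /= ltnS; apply: aux1.
  have : ev (f`_i * g`_j).
    by rewrite -(addrK (\sum_(l < (i+j).+1 | l != Ordinal ii) f`_l * g`_(i + j - l)) (f`_i * g`_j)) /ev rpredB.
  by apply/negP; apply: odd2M.
have : ((size (f*g)%R).-1 <= i + j)%N.
  by rewrite leqNgt; apply/negP => /hev; apply/negP.
rewrite size_mul // => hle.
have [ie je] := aux2 _ _ _ _ sf sg ile jle hle.
split; [apply: fev | apply: gev]; rewrite ?ie ?je; move: sf sg; clear; case: (size f) => [|[|a]]; case: (size g) => [|[|b]] //.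
Qed.

Lemma eisenstein2 (p : {poly int}) : p \is monic -> (1 < size p)%N ->
  (forall k, (k < (size p).-1)%N -> ev p`_k) -> ~~ (4 %| p`_0)%Z -> irreducible_poly p.
Proof.
move=> mp sp hev h4; split => // q sq qp.
have p0 : p != 0 by apply: monic_neq0.
have [r pr] := dvdpP_int qp.
have q0 : q != 0.
  by apply/negP => /eqP q0; move: qp; rewrite q0 dvd0p (negPf p0).
have sq2 : (1 < size q)%N.
  by move: sq q0; rewrite -size_poly_eq0; case: (size q) => [|[|]].
have r0 : r != 0 by apply/negP => /eqP r0; move: p0; rewrite pr r0 mulr0 eqxx.
have hl : lead_coef (zprimitive q) * lead_coef r = 1.
  by rewrite -lead_coefM -pr (eqP mp).
have odd1 (a b : int) : a * b = 1 -> ~~ ev a.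
  move=> ab; apply/negP => ea.
  have : ev (a * b) by apply: dvdz_mulr.
  by rewrite ab.
case: (ltnP 1 (size r)) => sr.
  have [e1 e2] : ev (zprimitive q)`_0 /\ ev r`_0.
    apply: parity_core => //.
    - by rewrite size_zprimitive.
    - exact: (odd1 _ _ hl).
    - by apply: (odd1 _ (lead_coef (zprimitive q))); rewrite mulrC.
    - by rewrite -pr.
  by move: h4; rewrite pr coef0M (dvdz_mul e1 e2).
have rc : r = (r`_0)%:P by apply: size1_polyC.
have c0 : r`_0 != 0.
  by apply/negP => /eqP c0; move: r0; rewrite rc c0 eqxx.
have pf : p = r`_0 *: zprimitive q by rewrite pr {1}rc mulrC mul_polyC.
apply: (@eqp_trans _ (zprimitive q)).
  rewrite {1}[q]zpolyEprim; apply: eqp_scale.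
  by rewrite zcontents_eq0.
by rewrite pf eqp_sym; apply: eqp_scale.
Qed.

Local Notation RR := Rdefinitions.R.

Lemma root_size_ge (p : {poly int}) (x : RR) : irreducible_poly p ->
  root (map_poly intr p) x ->
  forall f : {poly int}, f != 0 -> root (map_poly intr f) x -> (size p <= size f)%N.
Proof.
move=> ip rp f.
move: {2}(size f) (leqnn (size f)) => n; elim: n f => [|n IH] f sfn f0 rf.
  by move: f0; rewrite -size_poly_eq0; move: sfn; rewrite leqn0 => ->.
have := Pdiv.Idomain.divp_eq p f.
set k := (lead_coef f ^+ _); set d := p %/ f; set r := p %% f => e.
have rr : root (map_poly intr r) x.
  have := congr1 (fun g : {poly int} => (map_poly intr g : {poly RR}).[x]) e.
  rewrite /= map_polyZ !rmorphD rmorphM /= !hornerE.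
  by move: rp rf; rewrite /root => /eqP -> /eqP ->; rewrite !mulr0 add0r => <-.
case: (eqVneq r 0) => r0.
  have fp : f %| p by rewrite /dvdp -/r r0.
  have sf1 : size f != 1%N.
    apply/negP => /eqP sf1; have fc := size1_polyC (eq_leq sf1); move: rf f0; rewrite fc map_polyC /root hornerC intr_eq0 polyC_eq0 => -> //.
  by rewrite (eqp_size (ip.2 f sf1 fp)).
have srf : (size r < size f)%N by rewrite Pdiv.Idomain.ltn_modp.
have srn : (size r <= n)%N by rewrite -ltnS (leq_trans srf sfn).
have h := IH r srn r0 rr.
by rewrite (leq_trans h) // ltnW.
Qed.

Lemma irr_common_root (p c : {poly int}) (x : RR) : p \is monic -> irreducible_poly p ->
  root (map_poly intr p) x -> root (map_poly intr c) x -> exists q, c = p * q.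
Proof.
move=> mp ip rp rc.
have e := Pdiv.IdomainMonic.divp_eq mp c.
exists (c %/ p).
case: (eqVneq (c %% p) 0) => r0.
  by rewrite {1}e r0 addr0 mulrC.
have rr : root (map_poly intr (c %% p)) x.
  have := congr1 (fun g : {poly int} => (map_poly intr g : {poly RR}).[x]) e.
  rewrite /= !rmorphD rmorphM /= !hornerE.
  by move: rp rc; rewrite /root => /eqP -> /eqP ->; rewrite mulr0 add0r => <-.
have := root_size_ge _ _ ip rp _ r0 rr.
by rewrite leqNgt Pdiv.Idomain.ltn_modp monic_neq0.
Qed.

Definition mkmx (N : nat) (E : nat -> seq (nat * int)) : 'M[int]_N :=
  \matrix_(i, j) \sum_(e <- E j) (if e.1 == (i : nat) then e.2 else 0).

Lemma sum_sel_bound (l : seq (nat * int)) (h : int) (i : nat) :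
  uniq (map fst l) -> (forall e, e \in l -> 0 <= e.2 <= h) -> 0 <= h ->
  0 <= \sum_(e <- l) (if e.1 == i then e.2 else 0) <= h.
Proof.
elim: l => [|e l IH] /=; first by rewrite big_nil lexx => _ _ ->.
move=> /andP [nin ul] hw h0; rewrite big_cons.
have IH' := IH ul (fun e' he' => hw e' (mem_behead (s := e :: l) he')) h0.
case: eqP => ei.
  have -> : \sum_(e0 <- l) (if e0.1 == i then e0.2 else 0) = 0.
    apply: big1_seq => e' /andP [_ he']; case: eqP => // e'i.
    by move: nin; rewrite ei -e'i (map_f fst he').
  by rewrite addr0; apply: hw; rewrite mem_head.
by rewrite add0r.
Qed.

Lemma mkmx_bound N E (h : int) : 0 <= h ->
  (forall r, uniq (map fst (E r))) -> (forall r e, e \in E r -> 0 <= e.2 <= h) ->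
  forall i j, 0 <= (mkmx N E) i j <= h.
Proof.
move=> h0 hu hw i j; rewrite mxE; apply: sum_sel_bound => //; exact: hw.
Qed.

Lemma mkmx_eigen N E (v : nat -> RR) (lam : RR) :
  (forall r e, (r < N)%N -> e \in E r -> (e.1 < N)%N) ->
  (forall r, (r < N)%N -> \sum_(e <- E r) e.2%:~R * v e.1 = lam * v r) ->
  (\row_(j < N) v j) *m map_mx intr (mkmx N E) = lam *: \row_(j < N) v j.
Proof.
move=> ht he; apply/rowP => j; rewrite !mxE.
rewrite -he //.
under eq_bigr => i _ do rewrite !mxE rmorph_sum /= big_distrr /=.
rewrite exchange_big /=; apply: eq_big_seq => e /(ht _ _ (ltn_ord j)) eN.
rewrite (bigD1 (Ordinal eN)) //= eqxx big1 ?addr0; first by rewrite mulrC.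
move=> i /negPf ni; case: eqP => ei; last by rewrite mulr0.
by move: ni; rewrite (_ : i = Ordinal eN) ?eqxx //; apply: val_inj.
Qed.

Lemma eigen_root N (B : 'M[int]_N) (v : 'rV[RR]_N) (lam : RR) :
  v *m map_mx intr B = lam *: v -> v != 0 -> root (map_poly intr (char_poly B)) lam.
Proof.
move=> hv v0.
have : eigenvalue (map_mx intr B) lam by apply/eigenvalueP; exists v.
by rewrite eigenvalue_root_char map_char_poly.
Qed.
Lemma two_roots (pr : {poly RR}) (xl x0 xr D : RR) :
  xl <= x0 <= xr -> pr.[xl] < 0 -> 0 < pr.[x0] -> pr.[xr] < 0 -> xr - xl <= D ->
  exists lam mu : RR, [/\ lam != mu, root pr lam, root pr mu & `|lam - mu| <= D].
Proof.
move=> /andP [h1 h2] hl h0 hr hD.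
have [|l /andP [l1 l2] rl] := poly_ivt (p := pr) h1.
  by rewrite (ltW hl) (ltW h0).
have [u /andP [u1 u2] ru] : exists2 u, x0 <= u <= xr & root pr u.
  have [|u uu ru] := poly_ivt (p := - pr) h2.
    by rewrite !hornerN oppr_le0 oppr_ge0 (ltW hr) (ltW h0).
  by exists u => //; move: ru; rewrite /root hornerN oppr_eq0.
have lx : l < x0.
  rewrite lt_neqAle l2 andbT; apply/negP => /eqP e; move: rl; rewrite e /root.
  by rewrite gt_eqF.
have ux : x0 < u.
  rewrite lt_neqAle u1 andbT; apply/negP => /eqP e; move: ru; rewrite -e /root.
  by rewrite gt_eqF.
exists l, u; split => //.
  by rewrite lt_eqF // (lt_trans lx ux).
rewrite distrC ger0_norm; last by rewrite subr_ge0 ltW // (lt_trans lx ux).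
by apply: le_trans hD; apply: lerB.
Qed.

Lemma neg_at (a S x s : RR) (k : nat) : 0 < S -> s * S = 1 ->
  (x * a) ^+ 2 <= 1 -> (2 * a * x + 1 = s \/ 2 * a * x + 1 = - s) -> S = a ^+ k ->
  x ^+ (2 * k) - 2 * (2 * a * x + 1) ^+ 2 < 0.
Proof.
move=> S0 sS xa hs Sa.
have e : (x ^+ (2 * k) - 2 * (2 * a * x + 1) ^+ 2) * S ^+ 2 = ((x * a) ^+ 2) ^+ k - 2.
  have e1 : ((2 * a * x + 1) * S) ^+ 2 = 1.
    by case: hs => ->; rewrite ?mulNr sS ?sqrrN expr1n.
  have e2 : x ^+ (2 * k) * S ^+ 2 = ((x * a) ^+ 2) ^+ k.
    by rewrite Sa -exprM -exprM exprMn (mulnC k 2).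
  have e3 : forall y : RR, (x ^+ (2 * k) - 2 * y ^+ 2) * S ^+ 2 = x ^+ (2 * k) * S ^+ 2 - 2 * (y * S) ^+ 2 by move=> y; ring.
  by rewrite e3 e1 e2 mulr1.
have : ((x * a) ^+ 2) ^+ k - 2 < 0.
  rewrite subr_lt0 (le_lt_trans (exprn_ile1 _ _ _)) //; last by rewrite ltr1n.
  exact: sqr_ge0.
rewrite -e pmulr_llt0 //. by rewrite exprn_gt0.
Qed.

Lemma num_main (m h : nat) : (2 <= h)%N ->
  let H := h%:R : RR in let a := H ^+ m in
  let f := fun x : RR => x ^+ (2 * (m + 2)) - 2 * (2 * a * x + 1) ^+ 2 in
  exists xl x0 xr, [/\ xl <= x0 <= xr, f xl < 0, 0 < f x0, f xr < 0 &
     xr - xl <= (H ^+ (m * (m + 3)))^-1].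
Proof.
move=> hh H a f.
have H2 : 2 <= H by rewrite /H (ler_nat RR 2 h).
have H0 : 0 < H by apply: lt_le_trans H2.
have H1 : 1 <= H by apply: le_trans H2; rewrite ler1n.
have a0 : 0 < a by rewrite exprn_gt0.
have a1 : 1 <= a by rewrite exprn_ege1.
set S := a ^+ (m + 2).
have S0 : 0 < S by rewrite exprn_gt0.
have S1 : 1 <= S by rewrite exprn_ege1.
set s := S^-1.
have sS : s * S = 1 by rewrite mulVf // gt_eqF.
have s0 : 0 < s by rewrite invr_gt0.
have s1 : s <= 1 by rewrite invf_le1.
set c := (2 * a)^-1.
have c0 : 0 < c by rewrite invr_gt0 mulr_gt0.
have ac : 2 * a * c = 1 by rewrite mulfV // gt_eqF // mulr_gt0.
have ac' : a * c = 2^-1.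
  apply: (mulfI (x := 2)); first by rewrite pnatr_eq0.
  by rewrite mulrA ac mulfV // pnatr_eq0.
exists (- (1 + s) * c), (- c), (- (1 - s) * c); split.
- apply/andP; split; nra.
- apply: (neg_at _ _ _ _ _ S0 sS); last by [].
    have -> : - (1 + s) * c * a = - (1 + s) * (a * c) by ring.
    rewrite ac'; nra.
  right; have -> : 2 * a * (- (1 + s) * c) + 1 = - (1 + s) * (2 * a * c) + 1 by ring.
  rewrite ac; ring.
- rewrite /f.
  have -> : 2 * a * - c + 1 = 0 by rewrite mulrN ac addNr.
  rewrite expr0n /= mulr0 subr0 exprM.
  by rewrite exprn_gt0 // exprn_even_gt0 //= oppr_eq0 gt_eqF.
- apply: (neg_at _ _ _ _ _ S0 sS); last by [].
    have -> : - (1 - s) * c * a = - (1 - s) * (a * c) by ring.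
    rewrite ac'; nra.
  left; have -> : 2 * a * (- (1 - s) * c) + 1 = - (1 - s) * (2 * a * c) + 1 by ring.
  rewrite ac; ring.
- have -> : - (1 - s) * c - - (1 + s) * c = s * (a * c) * 2 / a by field; rewrite gt_eqF.
  rewrite ac' -(mulrA s) mulVf ?pnatr_eq0 // mulr1 /s -invfM.
  rewrite /S -exprSr /a -exprM.
  by rewrite (_ : (m * (m + 2).+1 = m * (m + 3))%N) //; lia.
Qed.
Definition Egen (m : nat) (hz : int) (i : nat) : seq (nat * int) :=
  if (i < 2 * m+3)%N then [:: (i.+1, 1)]
  else if i == (2 * m+3)%N then
    [:: ((2 * m+4)%N, 2); ((4 * m+4)%N, 2); ((4 * m+5)%N, 2); ((4 * m+6)%N, 2); (0%N, 2)]
  else if (i < 3 * m+4)%N then [:: (i.+1, hz)]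
  else if i == (3 * m+4)%N then
    [:: ((if m == 1%N then 2 * m+2 else 4 * m+3)%N, hz); ((m+2)%N, 1)]
  else if (i < 4 * m+4)%N then [:: ((if i == (3 * m+5)%N then 2 * m+2 else i.-1)%N, hz)]
  else [:: ((2 * m+5)%N, hz)].

Definition vgen (m : nat) (H lam : RR) (i : nat) : RR :=
  if (i <= 2 * m+3)%N then lam ^+ i
  else if (i <= 3 * m+4)%N then
    H ^+ (2 * m - (i - (2 * m+4))) * lam ^+ (2 + (i - (2 * m+4))) +
    H ^+ (m - (i - (2 * m+4))) * lam ^+ (1 + (i - (2 * m+4)))
  else if (i < 4 * m+4)%N then H ^+ (i - (3 * m+4)) * lam ^+ (2 * m+2 - (i - (3 * m+4)))
  else H ^+ (2 * m) * lam ^+ 2 + H ^+ m * lam.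

Ltac solve_ifs := repeat ((rewrite ifT; last by lia) || (rewrite ifF; last by lia)).

Lemma vgen_p m H lam i : (i <= 2 * m + 3)%N -> vgen m H lam i = lam ^+ i.
Proof. by move=> hi; rewrite /vgen hi. Qed.

Lemma vgen_t m H lam k : (k <= m)%N -> vgen m H lam (2 * m + 4 + k) =
  H ^+ (2 * m - k) * lam ^+ (2 + k) + H ^+ (m - k) * lam ^+ (1 + k).
Proof.
move=> hk; rewrite /vgen ifF; last by lia.
rewrite ifT; last by lia.
by rewrite (_ : (2 * m + 4 + k - (2 * m + 4) = k)%N) //; lia.
Qed.

Lemma vgen_s m H lam j : (1 <= j)%N -> (j < m)%N -> vgen m H lam (3 * m + 4 + j) =
  H ^+ j * lam ^+ (2 * m + 2 - j).
Proof.
move=> h1 h2; rewrite /vgen ifF; last by lia.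
rewrite ifF; last by lia.
rewrite ifT; last by lia.
by rewrite (_ : (3 * m + 4 + j - (3 * m + 4) = j)%N) //; lia.
Qed.

Lemma vgen_c m H lam i : (1 <= m)%N -> (4 * m + 4 <= i)%N -> vgen m H lam i =
  H ^+ (2 * m) * lam ^+ 2 + H ^+ m * lam.
Proof.
move=> m1 hi; rewrite /vgen ifF; last by lia.
rewrite ifF; last by lia.
by rewrite ifF; last by lia.
Qed.

Section E.
Variables (m : nat) (hz : int).
Hypothesis m1 : (1 <= m)%N.

Lemma E_p r : (r < 2 * m + 3)%N -> Egen m hz r = [:: (r.+1, 1)].
Proof. by move=> h; rewrite /Egen h. Qed.
Lemma E_top : Egen m hz (2 * m + 3) =
  [:: ((2 * m+4)%N, 2); ((4 * m+4)%N, 2); ((4 * m+5)%N, 2); ((4 * m+6)%N, 2); (0%N, 2)].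
Proof. by rewrite /Egen ltnn eqxx. Qed.
Lemma E_t r : (2 * m + 4 <= r)%N -> (r < 3 * m + 4)%N -> Egen m hz r = [:: (r.+1, hz)].
Proof.
move=> h1 h2; rewrite /Egen ifF; last by lia.
by rewrite ifF ?h2 //; lia.
Qed.
Lemma E_tm : Egen m hz (3 * m + 4) =
  [:: ((if m == 1%N then 2 * m+2 else 4 * m+3)%N, hz); ((m+2)%N, 1)].
Proof.
rewrite /Egen ifF; last by lia.
rewrite ifF; last by lia.
by rewrite ifF ?eqxx //; lia.
Qed.
Lemma E_s r : (3 * m + 5 <= r)%N -> (r < 4 * m + 4)%N ->
  Egen m hz r = [:: ((if r == (3 * m+5)%N then 2 * m+2 else r.-1)%N, hz)].
Proof.
move=> h1 h2; rewrite /Egen ifF; last by lia.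
rewrite ifF; last by lia.
rewrite ifF; last by lia.
by rewrite ifF ?h2 //; lia.
Qed.
Lemma E_c r : (4 * m + 4 <= r)%N -> Egen m hz r = [:: ((2 * m+5)%N, hz)].
Proof.
move=> h1; rewrite /Egen ifF; last by lia.
rewrite ifF; last by lia.
rewrite ifF; last by lia.
rewrite ifF; last by lia.
by rewrite ifF //; lia.
Qed.
End E.

Lemma Egen_eigen (m h : nat) (lam : RR) : (1 <= m)%N ->
  lam ^+ (2 * m + 4) = 8 * (h%:R) ^+ (2 * m) * lam ^+ 2 + 8 * (h%:R) ^+ m * lam + 2 ->
  forall r, (r < 4 * m + 7)%N ->
  \sum_(e <- Egen m h%:Z r) e.2%:~R * vgen m h%:R lam e.1 = lam * vgen m h%:R lam r.
Proof.
move=> m1 hp r rN; set H : RR := h%:R.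
have hH : (h%:Z)%:~R = H by rewrite -pmulrn.
have i2 : (2 : int)%:~R = 2 :> RR by [].
case: (ltnP r (2 * m + 3)) => h1.
  rewrite E_p // big_cons big_nil /= addr0 mul1r !vgen_p //; last by lia.
  by rewrite exprS.
case: (eqVneq r (2 * m + 3)%N) => h2.
  rewrite h2 E_top !big_cons big_nil /= addr0.
  rewrite -[(2 * m + 4)%N]addn0 vgen_t //.
  rewrite (vgen_c m H lam (4 * m + 4) m1) // (vgen_c m H lam (4 * m + 5) m1); last by lia.
  rewrite (vgen_c m H lam (4 * m + 6) m1); last by lia.
  rewrite (vgen_p m H lam 0) // (vgen_p m H lam (2 * m + 3)) //.
  rewrite -exprS addn0 (_ : (2 * m + 3).+1 = 2 * m + 4)%N; last by lia.
  rewrite hp !subn0 !addn0 i2 expr0 expr1 /H; ring.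
case: (ltnP r (3 * m + 4)) => h3.
  have [k -> km] : exists2 k, r = (2 * m + 4 + k)%N & (k < m)%N.
    by exists (r - (2 * m + 4))%N; lia.
  rewrite E_t //; try lia.
  rewrite big_cons big_nil /= addr0 hH -addnS !vgen_t //; try lia.
  rewrite (_ : (2 * m - k = (2 * m - k.+1).+1)%N); last by lia.
  rewrite (_ : (m - k = (m - k.+1).+1)%N); last by lia.
  rewrite !addnS !exprS; ring.
case: (eqVneq r (3 * m + 4)%N) => h4.
  rewrite h4 (E_tm m _ m1) !big_cons big_nil /= addr0 hH (vgen_p _ _ _ (m + 2)); last by lia.
  rewrite (_ : (3 * m + 4 = 2 * m + 4 + m)%N); last by lia.
  rewrite vgen_t // subnn expr0 (_ : (2 * m - m = m)%N); last by lia.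
  have i1 : (1 : int)%:~R = 1 :> RR by [].
  rewrite i1.
  case: (eqVneq m 1%N) => em.
    move: m1 hp rN h1 h2 h3 h4; rewrite em => *; rewrite vgen_p //=.
    ring.
  rewrite (_ : (4 * m + 3 = 3 * m + 4 + (m - 1))%N); last by lia.
  rewrite vgen_s; try lia.
  rewrite (_ : (2 * m + 2 - (m - 1) = m + 3)%N); last by lia.
  rewrite -[H ^+ m](_ : H * H ^+ (m - 1) = _); last first.
    by rewrite -exprS; congr (_ ^+ _); lia.
  rewrite !exprD; ring.
case: (ltnP r (4 * m + 4)) => h5.
  have [j [-> j1 jm]] : exists j, [/\ r = (3 * m + 4 + j)%N, (1 <= j)%N & (j < m)%N].
    by exists (r - (3 * m + 4))%N; split; lia.
  rewrite E_s //; try lia.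
  rewrite big_cons big_nil /= addr0 hH vgen_s //.
  case: (eqVneq j 1%N) => ej.
    rewrite ifT; last by lia.
    rewrite vgen_p; last by lia.
    rewrite ej expr1 (_ : (2 * m + 2 - 1 = 2 * m + 1)%N); last by lia.
    rewrite (_ : (2 * m + 2 = (2 * m + 1).+1)%N); last by lia.
    by rewrite exprS mulrCA.
  rewrite ifF; last by lia.
  rewrite (_ : ((3 * m + 4 + j).-1 = 3 * m + 4 + (j - 1))%N); last by lia.
  rewrite vgen_s; try lia.
  rewrite (_ : (2 * m + 2 - (j - 1) = (2 * m + 2 - j).+1)%N); last by lia.
  rewrite -[H ^+ j](_ : H * H ^+ (j - 1) = _); last first.
    by rewrite -exprS; congr (_ ^+ _); lia.
  rewrite !exprS; ring.
rewrite E_c // big_cons big_nil /= addr0 hH (vgen_c m H lam r m1 h5).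
rewrite (_ : (2 * m + 5 = 2 * m + 4 + 1)%N); last by lia.
rewrite vgen_t //.
rewrite -[H ^+ (2 * m)](_ : H * H ^+ (2 * m - 1) = _); last first.
  by rewrite -exprS; congr (_ ^+ _); lia.
rewrite -[H ^+ m](_ : H * H ^+ (m - 1) = _); last first.
  by rewrite -exprS; congr (_ ^+ _); lia.
rewrite /=; ring.
Qed.

Lemma Egen_uniq m hz r : (1 <= m)%N -> uniq (map fst (Egen m hz r)).
Proof.
move=> m1; rewrite /Egen; do ![case: ifP => ?]; rewrite /= ?inE ?andbT //.
all: try (case: ifP => /=; lia).
all: lia.
Qed.

Lemma Egen_w m (h : nat) r e : (2 <= h)%N -> e \in Egen m h%:Z r -> 0 <= e.2 <= h%:Z.
Proof.
move=> h2; rewrite /Egen; do ![case: ifP => ?]; rewrite !inE.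
all: repeat (case/orP; [move/eqP ->|]); try (move/eqP ->).
all: rewrite /= ?lez_nat; lia.
Qed.

Lemma Egen_t m hz r e : (1 <= m)%N -> (r < 4 * m + 7)%N -> e \in Egen m hz r -> (e.1 < 4 * m + 7)%N.
Proof.
move=> m1 rN; rewrite /Egen; do ![case: ifP => ?]; rewrite !inE.
all: repeat (case/orP; [move/eqP ->|]); try (move/eqP ->).
all: rewrite /=; try (case: ifP => /=); lia.
Qed.

Lemma pform (d : nat) (s : seq int) : (0 < d)%N -> (size s <= d)%N ->
  all ev s -> s`_0 = 2 ->
  [/\ 'X^d - Poly s \is monic, size ('X^d - Poly s) = d.+1 & irreducible_poly ('X^d - Poly s)].
Proof.
move=> d0 sd es s0.
have sq : (size (Poly s) <= d)%N by apply: leq_trans (size_Poly s) sd.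
have sz : size ('X^d - Poly s) = d.+1.
  by rewrite size_polyDl size_polyXn // size_polyN ltnS.
have mo : 'X^d - Poly s \is monic.
  by rewrite monicE lead_coefDl ?lead_coefXn // size_polyXn size_polyN ltnS.
split => //; apply: eisenstein2 => //; first by rewrite sz.
  move=> k; rewrite sz /= => kd.
  rewrite coefB coefXn (ltn_eqF kd) sub0r /ev rpredN coef_Poly.
  case: (ltnP k (size s)) => ks; last by rewrite nth_default.
  exact: (allP es _ (mem_nth 0 ks)).
rewrite coefB coefXn (ltn_eqF d0) sub0r coef_Poly s0 //.
Qed.

Lemma horner_pform (d : nat) (s : seq int) (x : RR) :
  (map_poly intr ('X^d - Poly s) : {poly RR}).[x] = x ^+ d - (Poly (map intr s)).[x].
Proof.
rewrite rmorphB /= map_polyXn hornerD hornerN hornerXn.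
congr (_ - _.[x]); apply/polyP => k; rewrite coef_map /= !coef_Poly.
case: (ltnP k (size s)) => ks; first by rewrite (nth_map 0).
by rewrite !nth_default ?size_map.
Qed.

Definition E1 (i : nat) : seq (nat * int) :=
  match i with 0 => [:: (1%N, 1)] | 1 => [:: (0%N, 2)] | _ => [::] end.
Definition v1 (lam : RR) (i : nat) : RR :=
  match i with 0 => 1 | 1 => lam | _ => 0 end.

Definition E3 (i : nat) : seq (nat * int) :=
  match i with
  | 0 => [:: (1%N, 1)] | 1 => [:: (2%N, 1)] | 2 => [:: (3%N, 1)]
  | 3 => [:: (4%N, 2); (5%N, 2); (0%N, 2)]
  | 4 | 5 => [:: (3%N, 2); (2%N, 2)]
  | _ => [::] end.
Definition v3 (lam : RR) (i : nat) : RR :=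
  match i with 0 => 1 | 1 => lam | 2 => lam ^+ 2 | 3 => lam ^+ 3
  | 4 | 5 => 2 * lam ^+ 2 + 2 * lam | _ => 0 end.

Lemma E1_eigen lam : lam ^+ 2 = 2 -> forall r, (r < 3)%N ->
  \sum_(e <- E1 r) e.2%:~R * v1 lam e.1 = lam * v1 lam r.
Proof.
move=> hl r; case: r => [|[|[|r]]] => //= _; rewrite ?big_cons ?big_nil /=.
- by rewrite addr0 mul1r mulr1.
- by rewrite addr0 mulr1 -expr2 hl.
- by rewrite mulr0.
Qed.

Lemma E3_eigen lam : lam ^+ 4 = 8 * lam ^+ 2 + 8 * lam + 2 -> forall r, (r < 7)%N ->
  \sum_(e <- E3 r) e.2%:~R * v3 lam e.1 = lam * v3 lam r.
Proof.
move=> hl r; case: r => [|[|[|[|[|[|[|r]]]]]]] => //= _; rewrite ?big_cons ?big_nil /=.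
- by rewrite addr0 mul1r mulr1.
- by rewrite addr0 mul1r expr2.
- by rewrite addr0 mul1r exprS.
- have -> : lam * lam ^+ 3 = lam ^+ 4 by rewrite exprS.
  rewrite hl; have -> : (2 : int)%:~R = 2 :> RR by []. ring.
- have -> : (2 : int)%:~R = 2 :> RR by []. ring.
- have -> : (2 : int)%:~R = 2 :> RR by []. ring.
- by rewrite mulr0.
Qed.

Lemma E1_ok (h : nat) : (2 <= h)%N ->
  [/\ forall r, uniq (map fst (E1 r)), forall r e, e \in E1 r -> 0 <= e.2 <= h%:Z &
      forall r e, (r < 3)%N -> e \in E1 r -> (e.1 < 3)%N].
Proof.
move=> h2; split.
- by move=> r; case: r => [|[|r]].
- move=> r e; case: r => [|[|r]] => //=; rewrite inE => /eqP -> /=; lia.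
- move=> r e; case: r => [|[|r]] => //= _; rewrite inE => /eqP -> //.
Qed.

Lemma E3_ok (h : nat) : (2 <= h)%N ->
  [/\ forall r, uniq (map fst (E3 r)), forall r e, e \in E3 r -> 0 <= e.2 <= h%:Z &
      forall r e, (r < 7)%N -> e \in E3 r -> (e.1 < 7)%N].
Proof.
move=> h2; split.
- by move=> r; case: r => [|[|[|[|[|[|r]]]]]].
- move=> r e; case: r => [|[|[|[|[|[|r]]]]]] => //=; rewrite !inE;
  repeat (case/orP; [move/eqP ->|]); try (move/eqP ->); rewrite /=; lia.
- move=> r e; case: r => [|[|[|[|[|[|r]]]]]] => //= _; rewrite !inE;
  repeat (case/orP; [move/eqP ->|]); try (move/eqP ->); by [].
Qed.

Lemma char_div N E (p : {poly int}) (v : RR -> nat -> RR) lam : (0 < N)%N ->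
  p \is monic -> irreducible_poly p ->
  (forall r e, (r < N)%N -> e \in E r -> (e.1 < N)%N) ->
  (forall r, (r < N)%N -> \sum_(e <- E r) e.2%:~R * v lam e.1 = lam * v lam r) ->
  v lam 0%N = 1 -> root (map_poly intr p) lam ->
  exists q, char_poly (mkmx N E) = p * q.
Proof.
move=> N0 mp ip ht he v0 rp.
apply: (irr_common_root _ _ lam mp ip rp).
apply: (eigen_root _ _ (\row_(j < N) v lam j)).
  exact: mkmx_eigen.
apply/eqP => /rowP /(_ (Ordinal N0)); rewrite !mxE /= v0 => /eqP.
by rewrite oner_eq0.
Qed.


Lemma sep_gen m : sep_exp (2 * m + 3) = (m * (m + 3))%N.
Proof.
rewrite /sep_exp.
have -> : ((2 * m + 3)%N%:Z + 3) * ((2 * m + 3)%N%:Z - 3) = (m * (m + 3))%N%:Z * 4 by lia.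
exact: mulzK.
Qed.

Lemma horner_P3 (a b c x : RR) : (Poly [:: a; b; c]).[x] = a + b * x + c * x ^+ 2.
Proof. rewrite /= !horner_cons horner0; ring. Qed.

Lemma horner_P1 (a x : RR) : (Poly [:: a]).[x] = a.
Proof. by rewrite /= !horner_cons horner0 mul0r add0r. Qed.

Lemma n1_facts : [/\ (-2 : RR) <= (0 : RR) <= (2 : RR), - ((-2 : RR) ^+ 2 - 2) < (0 : RR),
   (0 : RR) < - ((0 : RR) ^+ 2 - 2), - ((2 : RR) ^+ 2 - 2) < (0 : RR) & (2 : RR) - (-2 : RR) <= (4 : RR)].
Proof. rewrite !expr2; split; try lra; apply/andP; split; lra. Qed.

Lemma sq4 (x : RR) : 2 <= x -> 4 <= x ^+ 2.
Proof. rewrite expr2; nra. Qed.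

Lemma aux3 m : ((2 * m + 4).+1 = 2 * m + 3 + 2)%N.
Proof. lia. Qed.

Theorem mainTheorem1 (n h : nat) (hn_odd : odd n) (hn_pos : (0 < n)%N) (hh : (2 <= h)%N) :
  exists B : 'M[int]_(n.*2.+1),
    (forall i j, 0 <= B i j <= h%:Z) /\
    exists p : {poly int},
      [/\ p \is monic, irreducible_poly p, size p = (n + 2)%N,
          (exists q : {poly int}, char_poly B = p * q) &
          exists lam mu : Rdefinitions.R,
            [/\ lam != mu,
                root (map_poly intr p) lam,
                root (map_poly intr p) mu &
                `|lam - mu| <= (h%:R : Rdefinitions.R) ^ (- sep_exp n)]].
Proof.
have H2 : 2 <= (h%:R : RR) by rewrite (ler_nat RR 2 h).
have h0 : 0 <= h%:Z by [].
have [->|[m ->]] : n = 1%N \/ exists m, n = (2 * m + 3)%N.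
  case: n hn_odd hn_pos => [|[|n]] //= hodd _; first by left.
  right; have := odd_double_half n.+2; rewrite /= hodd -mul2n => e.
  by exists ((n.+2)./2 - 1)%N; lia.
-
  have [E1u E1w E1t] := E1_ok h hh.
  exists (mkmx (1.*2.+1) E1); split; first by apply: mkmx_bound.
  have [mo sz ir] := pform 2 [:: 2] isT isT isT erefl.
  exists ('X^2 - Poly [:: 2]).
  have hp x : (map_poly intr ('X^2 - Poly [:: 2]) : {poly RR}).[x] = x ^+ 2 - 2.
    by rewrite horner_pform /= horner_P1.
  have rts : forall lam : RR, root (map_poly intr ('X^2 - Poly [:: 2])) lam -> lam ^+ 2 = 2.
    by move=> lam; rewrite /root hp subr_eq0 => /eqP.
  have [lam [mu [lm rl rm dl]]] : exists lam mu : RR,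
      [/\ lam != mu, root (- map_poly intr ('X^2 - Poly [:: 2])) lam,
          root (- map_poly intr ('X^2 - Poly [:: 2])) mu & `|lam - mu| <= 4].
    have [a1 a2 a3 a4 a5] := n1_facts.
    apply: (two_roots _ (-2) 0 2) => //; rewrite !hornerN !hp //.
  move: rl rm; rewrite /root !hornerN !oppr_eq0 => rl rm.
  split => //.
  + apply: (char_div _ _ _ v1 lam) => //.
    by apply: E1_eigen; apply: rts.
  + exists lam, mu; split => //.
    rewrite (_ : sep_exp 1 = -2) // opprK.
    apply: (le_trans dl); rewrite /exprz /=; exact: sq4.
-
  set s : seq int := [:: 2; 8 * (h%:Z) ^+ m; 8 * (h%:Z) ^+ (2 * m)].
  have [mo sz ir] : [/\ 'X^(2 * m + 4) - Poly s \is monic,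
       size ('X^(2 * m + 4) - Poly s) = (2 * m + 4).+1%N &
       irreducible_poly ('X^(2 * m + 4) - Poly s)].
    apply: pform => //; rewrite /s /=; try lia.
    by rewrite /ev andbT; apply/andP; split; apply: dvdz_mulr.
  set p := 'X^(2 * m + 4) - Poly s.
  set H : RR := h%:R.
  have hz k : ((h%:Z) ^+ k)%:~R = H ^+ k :> RR.
    by rewrite rmorphXn /= -pmulrn.
  have i8 : (8 : int)%:~R = 8 :> RR by [].
  have i2 : (2 : int)%:~R = 2 :> RR by [].
  have hp x : (map_poly intr p : {poly RR}).[x] =
      x ^+ (2 * m + 4) - (8 * H ^+ (2 * m) * x ^+ 2 + 8 * H ^+ m * x + 2).
    rewrite horner_pform /= horner_P3 !rmorphM /= !hz i8 i2; ring.
  have NN : ((2 * m + 3).*2.+1 = 4 * m + 7)%N by rewrite -mul2n; lia.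
  have [xl [x0 [xr [hx fl f0 fr hd]]]] := num_main m h hh.
  have ef x : (map_poly intr p : {poly RR}).[x] =
     x ^+ (2 * (m + 2)) - 2 * (2 * H ^+ m * x + 1) ^+ 2.
    rewrite hp (_ : (2 * m + 4 = 2 * (m + 2))%N); last by lia.
    rewrite -[H ^+ (2 * m)](_ : (H ^+ m) ^+ 2 = _); last by rewrite -exprM mulnC.
    ring.
  have fl' : (map_poly intr p : {poly RR}).[xl] < 0 by rewrite ef.
  have f0' : 0 < (map_poly intr p : {poly RR}).[x0] by rewrite ef.
  have fr' : (map_poly intr p : {poly RR}).[xr] < 0 by rewrite ef.
  have [lam [mu [lm rl rm dl]]] := two_roots (map_poly intr p) xl x0 xr _ hx fl' f0' fr' hd.
  have rts lam' : root (map_poly intr p) lam' ->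
      lam' ^+ (2 * m + 4) = 8 * H ^+ (2 * m) * lam' ^+ 2 + 8 * H ^+ m * lam' + 2.
    by rewrite /root hp subr_eq0 => /eqP.
  case: (posnP m) => [m0|m1].
  +
    have [E3u E3w E3t] := E3_ok h hh.
    have N7 : ((2 * m + 3).*2.+1 = 7)%N by rewrite m0.
    exists (mkmx _ E3); split; first by apply: mkmx_bound.
    exists p; split => //; first by rewrite sz aux3.
      apply: (char_div _ _ _ v3 lam) => //; rewrite ?N7 //.
      apply: E3_eigen; have := rts _ rl; rewrite m0 /= !expr0 !mulr1 //.
    exists lam, mu; split => //.
    rewrite sep_gen -exprnN; exact: dl.
  + exists (mkmx _ (Egen m h%:Z)); split.
      apply: mkmx_bound => // r; first exact: Egen_uniq.
      by move=> e; apply: Egen_w.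
    exists p; split => //; first by rewrite sz aux3.
      apply: (char_div _ _ _ (fun l => vgen m H l) lam) => //; rewrite ?NN //.
      * by move=> r e; apply: Egen_t.
      * by apply: Egen_eigen => //; apply: rts.
    exists lam, mu; split => //.
    rewrite sep_gen -exprnN; exact: dl.
Qed.
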